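(* Let $C$ be a kernel configuration. In every $K$-vector space $\mathbb V$ with a $C$-endomorphism $\theta$ which is $C$-image-complete, the following maps are well-defined $K$-linear endomorphisms of $\mathbb V$, each definable by an $L_{K,\theta}$-formula without parameters independent of $(\mathbb V,\theta)$: (1) for every finite $F\subseteq K[X]_{\mathrm{irr}}^{0<C<\infty}$, $\pi_{\mathrm{Im}(F^C)}(x):=$ the unique $u\in\mathrm{Im}(F^C)$ such that $x=u+v$ for some $v\in\mathrm{Ker}(F^C)$; (2) for every finite $F\subseteq K[X]_{\mathrm{irr}}^{0<C<\infty}$, $\pi_{\mathrm{Ker}(F^C)}(x):=$ the unique $v\in\mathrm{Ker}(F^C)$ such that $x=u+v$ for some $u\in\mathrm{Im}(F^C)$ (so $\pi_{\mathrm{Ker}(F^C)}=\mathrm{Id}-\pi_{\mathrm{Im}(F^C)}$); (3) for every monic $\eta\in K[X]$ all of whose monic irreducible factors $f$ satisfy $C(f)<\infty$, $\eta[\theta]^{-1}(x):=$ the unique $u\in\mathrm{Im}(\mathrm{Fac}(\eta)^C)$ with $\eta[\theta](u)=\pi_{\mathrm{Im}(\mathrm{Fac}(\eta)^C)}(x)$.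
   Context: $K$ is a field, $K[X]_{\mathrm{irr}}$ the set of monic irreducible polynomials. $L_{K,\theta}=\{0,+,(q\cdot)_{q\in K},\theta\}$ is the language of $K$-vector spaces with a unary function $\theta$. For $\rho=\sum_i(\rho)_iX^i$, $\rho[\theta]=\sum_i(\rho)_i\theta^i$; $\mathrm{Ker}(\rho),\mathrm{Im}(\rho)$ its kernel and image. A kernel configuration is $C=(c,d)$ with $c:K[X]_{\mathrm{irr}}\to\mathbb N\cup\{\infty\}$, $d\in\mathbb N_{>0}\cup\{\infty\}$, $d=\infty$ or $d=\sum_f\deg(f)c(f)$; $C(f)=c(f)$. $C$ is algebraic if $d<\infty$ (with $\mathrm{MiPo}(C)=\prod_ff^{C(f)}$), transcendental otherwise. $\theta$ is a $C$-endomorphism if $\mathrm{MiPo}(C)[\theta]=0$ (algebraic case), resp. $\mathrm{Ker}(f^{C(f)})=\mathrm{Ker}(f^{C(f)+1})$ for all $f$ with $C(f)<\infty$ (transcendental case). $\theta$ is $C$-image-complete if $\mathrm{Im}(f^{C(f)})=\mathrm{Im}(f^{C(f)+1})$ for all $f$ with $C(f)<\infty$. $K[X]_{\mathrm{irr}}^{0<C<\infty}=\{f:0<C(f)<\infty\}$; for finite $F\subseteq K[X]_{\mathrm{irr}}$ with $C(f)<\infty$ for all $f\in F$, $F^C:=\prod_{f\in F}f^{C(f)}$. $\mathrm{Fac}(\eta)$ is the set of monic irreducible factors of $\eta$. *)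

(* Defs.v *)
From HB Require Import structures.
From mathcomp Require Import all_boot all_order all_algebra.
Set Implicit Arguments. Unset Strict Implicit. Unset Printing Implicit Defensive.
Import GRing.Theory.
Local Open Scope ring_scope.

Section Defs.
Variable K : fieldType.

Definition mirr (f : {poly K}) : Prop := f \is monic /\ irreducible_poly f.

(* Kernel configuration C = (c,d); None encodes infinity. *)
Record kconf := KConf { kc_c : {poly K} -> option nat ; kc_d : option nat }.

Definition is_kernel_config (C : kconf) : Prop :=
  match kc_d C with
  | None => True
  | Some d0 => (0 < d0)%N /\
      (* d = sum_f deg(f) c(f), with the (a priori infinite) sum finite *)
      exists s : seq {poly K}, [/\ uniq s, (forall f, f \in s -> mirr f),
        (forall f, mirr f -> f \notin s -> kc_c C f = Some 0%N),
        (forall f, f \in s -> kc_c C f <> None) &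
        (\sum_(f <- s) ((size f).-1 * odflt 0 (kc_c C f)))%N = d0]
  end.

Definition algebraic (C : kconf) : Prop := kc_d C <> None.

Definition peval (V : lmodType K) (th : V -> V) (rho : {poly K}) (x : V) : V :=
  \sum_(i < size rho) rho`_i *: iter i th x.

Definition inKer (V : lmodType K) (th : V -> V) rho (v : V) : Prop :=
  peval th rho v = 0.
Definition inIm (V : lmodType K) (th : V -> V) rho (u : V) : Prop :=
  exists y, u = peval th rho y.

Definition C_endo (C : kconf) (V : lmodType K) (th : V -> V) : Prop :=
  match kc_d C with
  | Some _ => (* MiPo(C)[theta] = 0, MiPo(C) = prod_{f in s} f^C(f) for any
                 duplicate-free list s of elements of K[X]_irr containing
                 every f with C(f) > 0 *)
      forall s : seq {poly K}, uniq s -> (forall f, f \in s -> mirr f) ->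
        (forall f, mirr f -> kc_c C f <> Some 0%N -> f \in s) ->
        forall x, peval th (\prod_(f <- s) f ^+ odflt 0%N (kc_c C f)) x = 0
  | None =>
      forall f n, mirr f -> kc_c C f = Some n ->
        forall x, inKer th (f ^+ n) x <-> inKer th (f ^+ n.+1) x
  end.

Definition C_image_complete (C : kconf) (V : lmodType K) (th : V -> V) : Prop :=
  forall f n, mirr f -> kc_c C f = Some n ->
    forall x, inIm th (f ^+ n) x <-> inIm th (f ^+ n.+1) x.

(* F is a finite subset of K[X]_irr^{0<C<oo}, given as a duplicate-free list *)
Definition good_F (C : kconf) (F : seq {poly K}) : Prop :=
  uniq F /\ forall f, f \in F -> mirr f /\ exists n, kc_c C f = Some n /\ (0 < n)%N.

Definition FC (C : kconf) (F : seq {poly K}) : {poly K} :=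
  \prod_(f <- F) f ^+ odflt 0%N (kc_c C f).

Definition is_Fac (eta : {poly K}) (s : seq {poly K}) : Prop :=
  uniq s /\ forall f, f \in s <-> (mirr f /\ f %| eta).

Inductive term :=
  | TVar of nat
  | TZero
  | TAdd of term & term
  | TScale of K & term
  | TTheta of term.

Inductive formula :=
  | FEq of term & term
  | FNot of formula
  | FAnd of formula & formula
  | FEx of nat & formula.

Fixpoint teval (V : lmodType K) (th : V -> V) (e : nat -> V) (t : term) : V :=
  match t with
  | TVar n => e n
  | TZero => 0
  | TAdd t1 t2 => teval th e t1 + teval th e t2
  | TScale q t1 => q *: teval th e t1
  | TTheta t1 => th (teval th e t1)
  end.

Definition upd (V : Type) (e : nat -> V) (n : nat) (v : V) : nat -> V :=
  fun m => if m == n then v else e m.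

Fixpoint sat (V : lmodType K) (th : V -> V) (e : nat -> V) (phi : formula) : Prop :=
  match phi with
  | FEq t1 t2 => teval th e t1 = teval th e t2
  | FNot p => ~ sat th e p
  | FAnd p q => sat th e p /\ sat th e q
  | FEx n p => exists v, sat th (upd e n v) p
  end.

Definition defines_linear_map (V : lmodType K) (th : V -> V)
    (phi : formula) (R : V -> V -> Prop) : Prop :=
  (exists g : {linear V -> V}, forall x y, R x y <-> y = g x) /\
  (forall e : nat -> V, sat th e phi <-> R (e 0%N) (e 1%N)).

Definition projIm (V : lmodType K) (th : V -> V) P (x u : V) : Prop :=
  inIm th P u /\ exists v, inKer th P v /\ x = u + v.
Definition projKer (V : lmodType K) (th : V -> V) P (x v : V) : Prop :=
  inKer th P v /\ exists u, inIm th P u /\ x = u + v.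

Definition invRel (V : lmodType K) (th : V -> V) P eta (x u : V) : Prop :=
  inIm th P u /\ projIm th P x (peval th eta u).

End Defs.

(* Main.v *)
Require Import Defs.
From Stdlib Require Import ClassicalEpsilon Classical.
From HB Require Import structures.
From mathcomp Require Import all_boot all_order all_algebra.
From mathcomp Require Import zify.
Import GRing.Theory.
Local Open Scope ring_scope.
Set Implicit Arguments. Unset Strict Implicit.

Section Peval.
Variables (K : fieldType) (V : lmodType K) (th : {linear V -> V}).
Local Notation pe := (peval th).

Lemma iter_lin i a (x y : V) : iter i th (a *: x + y) = a *: iter i th x + iter i th y.
Proof. by elim: i => //= i ->; rewrite linearD linearZ. Qed.

Lemma iter_th i (x : V) : th (iter i th x) = iter i th (th x).
Proof. by rewrite -iterS iterSr. Qed.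

Lemma pe_lin (p : {poly K}) a (x y : V) : pe p (a *: x + y) = a *: pe p x + pe p y.
Proof.
rewrite /peval scaler_sumr -big_split /=; apply: eq_bigr => i _.
by rewrite iter_lin scalerDr !scalerA mulrC.
Qed.

Lemma pe0x (p : {poly K}) : pe p 0 = 0.
Proof.
rewrite /peval; apply: big1 => i _.
have -> : iter i th 0 = 0 by elim: (nat_of_ord i) => //= j ->; rewrite linear0.
by rewrite scaler0.
Qed.

Lemma peD (p : {poly K}) (x y : V) : pe p (x + y) = pe p x + pe p y.
Proof. by rewrite -(scale1r x) pe_lin !scale1r. Qed.

Lemma peZ (p : {poly K}) a (x : V) : pe p (a *: x) = a *: pe p x.
Proof. by rewrite -(addr0 (a *: x)) pe_lin pe0x addr0. Qed.

Lemma peN (p : {poly K}) (x : V) : pe p (- x) = - pe p x.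
Proof. by rewrite -scaleN1r peZ scaleN1r. Qed.

Lemma peB (p : {poly K}) (x y : V) : pe p (x - y) = pe p x - pe p y.
Proof. by rewrite peD peN. Qed.

Lemma pe_widen n (p : {poly K}) (x : V) : (size p <= n)%N ->
  pe p x = \sum_(i < n) p`_i *: iter i th x.
Proof.
move=> hn; rewrite /peval (big_ord_widen n (fun i => p`_i *: iter i th x)) //.
rewrite big_mkcond /=; apply: eq_bigr => i _.
case: ifP => // /negbT; rewrite -leqNgt => hi.
by rewrite nth_default // scale0r.
Qed.

Lemma pe_add (p q : {poly K}) (x : V) : pe (p + q) x = pe p x + pe q x.
Proof.
set n := maxn (size p) (size q).
rewrite (@pe_widen n (p + q)); last by rewrite (leq_trans (size_polyD _ _)).
rewrite (@pe_widen n p) ?leq_maxl // (@pe_widen n q) ?leq_maxr //.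
by rewrite -big_split /=; apply: eq_bigr => i _; rewrite coefD scalerDl.
Qed.

Lemma pe_C c (x : V) : pe c%:P x = c *: x.
Proof.
by rewrite (@pe_widen 1) ?size_polyC ?leq_b1 // big_ord1 coefC.
Qed.

Lemma pe_zero (x : V) : pe 0 x = 0.
Proof. by rewrite /peval size_poly0 big_ord0. Qed.

Lemma pe_th (p : {poly K}) (x : V) : th (pe p x) = pe p (th x).
Proof.
rewrite /peval linear_sum; apply: eq_bigr => i _.
by rewrite linearZ iter_th.
Qed.

Lemma pe_mulX (p : {poly K}) (x : V) : pe (p * 'X) x = pe p (th x).
Proof.
rewrite (@pe_widen (size p).+1 (p * 'X)); last first.
  by rewrite (leq_trans (size_polyMleq _ _)) // size_polyX addn2.
rewrite big_ord_recl coefMX /= scale0r add0r /peval.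
by apply: eq_bigr => i _; rewrite coefMX /= add0n iter_th.
Qed.


Lemma pe_mul (p q : {poly K}) (x : V) : pe (p * q) x = pe p (pe q x).
Proof.
elim/poly_ind: p x => [|p c IH] x; first by rewrite mul0r !pe_zero.
rewrite mulrDl pe_add pe_add pe_C mulrAC (pe_mulX (p * q)) IH -pe_th pe_mulX.
congr (_ + _).
rewrite mul_polyC /peval; case: (eqVneq c 0) => [->|c0].
  by rewrite scale0r size_poly0 big_ord0 scale0r.
rewrite size_scale // scaler_sumr; apply: eq_bigr => i _.
by rewrite coefZ scalerA.
Qed.

Lemma pe_comm (p q : {poly K}) (x : V) : pe p (pe q x) = pe q (pe p x).
Proof. by rewrite -!pe_mul mulrC. Qed.

Lemma pe_one (x : V) : pe 1 x = x.
Proof. by rewrite pe_C scale1r. Qed.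

End Peval.

Section MkLin.
Variables (K : fieldType) (V : lmodType K) (g : V -> V) (Hg : linear g).
Definition mkl : V -> V := g.
HB.instance Definition _ := GRing.isLinear.Build K V V *:%R mkl Hg.
Definition mklin : {linear V -> V} := mkl.
Lemma mklinE x : mklin x = g x. Proof. by []. Qed.
End MkLin.

Section Stab.
Variables (K : fieldType) (V : lmodType K) (th : {linear V -> V}).
Local Notation pe := (peval th).

Lemma gen_lin (R : V -> V -> Prop) :
  (forall x, exists! y, R x y) ->
  (forall a x x' y y', R x y -> R x' y' -> R (a *: x + x') (a *: y + y')) ->
  exists g : {linear V -> V}, forall x y, R x y <-> y = g x.
Proof.
move=> ex cl.
have ex' : forall x, exists y, R x y by move=> x; case: (ex x) => y [] ? _; exists y.
pose g0 x := proj1_sig (constructive_indefinite_description _ (ex' x)).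
have Rg x : R x (g0 x) by rewrite /g0; case: constructive_indefinite_description.
have uq x y y' : R x y -> R x y' -> y = y'.
  by case: (ex x) => z [] _ H a b; rewrite -(H _ a) -(H _ b).
have lg : linear g0.
  move=> a x x'; apply: (uq (a *: x + x')); first exact: Rg.
  exact: cl.
exists (@mklin K V g0 lg) => x y; rewrite mklinE; split; first by move=> h; apply: uq h (Rg x).
by move=> ->.
Qed.

Definition Stab (a A : {poly K}) :=
  (forall x, pe (a * A) x = 0 -> pe A x = 0) /\
  (forall x, exists z, pe A x = pe (a * A) z).

Lemma Stab1 A : Stab 1 A.
Proof. by split=> [x|x]; rewrite mul1r //; exists x. Qed.

Lemma StabM a b A : Stab a A -> Stab b A -> Stab (a * b) A.
Proof.
move=> [ka ia] [kb ib]; split.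
  move=> x h; apply: kb.
  have h1 : pe (a * A) (pe b x) = 0 by rewrite -pe_mul -mulrA (mulrC A b) mulrA.
  by move/ka: h1; rewrite -pe_mul mulrC.
move=> x; case: (ib x) => y ->; case: (ia y) => z hz.
exists z; rewrite pe_mul hz -pe_mul.
by rewrite mulrA (mulrC b a).
Qed.

Lemma StabX a k A : Stab a A -> Stab (a ^+ k) A.
Proof.
move=> h; elim: k => [|k IH]; first by rewrite expr0; exact: Stab1.
by rewrite exprS; apply: StabM.
Qed.

Lemma StabR a A B : Stab a A -> Stab a (A * B).
Proof.
move=> [ka ia]; split.
  move=> x h; rewrite pe_mul; apply: ka.
  by rewrite -pe_mul -mulrA.
move=> x; rewrite mulrC pe_mul; case: (ia x) => z ->.
by exists z; rewrite -pe_mul mulrCA mulrC.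
Qed.

Lemma Stab_prod (I : eqType) (r : seq I) (F : I -> {poly K}) (A : {poly K}) :
  (forall i, i \in r -> Stab (F i) A) -> Stab (\prod_(i <- r) F i) A.
Proof.
elim: r => [|i r IH] h; first by rewrite big_nil; exact: Stab1.
rewrite big_cons; apply: StabM; first by apply: h; rewrite inE eqxx.
by apply: IH => j hj; apply: h; rewrite inE hj orbT.
Qed.

Lemma StabC c A : c != 0 -> Stab c%:P A.
Proof.
move=> c0; split.
  move=> x; rewrite pe_mul pe_C => /eqP; rewrite scaler_eq0 (negbTE c0) /=.
  by move/eqP.
by move=> x; exists (c^-1 *: x); rewrite pe_mul pe_C peZ scalerA divff // scale1r.
Qed.

Lemma Stab_dec P x : Stab P P -> exists2 u, projIm th P x u & forall u', projIm th P x u' -> u' = u.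
Proof.
move=> [kP iP]; case: (iP x) => z hz.
have Hu : projIm th P x (pe P z).
  split; first by exists z.
  exists (x - pe P z); split; last by rewrite addrC subrK.
  by rewrite /inKer peB hz -pe_mul subrr.
exists (pe P z) => // u' [[y ->] [v [hv hx]]].
have e1 : pe P (pe P y) = pe (P * P) z by rewrite -hz hx peD hv addr0.
have : pe (P * P) (y - z) = 0 by rewrite peB pe_mul e1 subrr.
by move/kP; rewrite peB => /eqP; rewrite subr_eq0 => /eqP.
Qed.
End Stab.

Section Poly.
Variable K : fieldType.

Lemma coprime_mirr (f g : {poly K}) : mirr f -> mirr g -> f != g -> coprimep f g.
Proof.
move=> [mf irf] [mg irg] fg; apply/coprimepP => d df dg.
case: (irredp_XsubCP irf df) => // hdf.
have fdg : f %| g by rewrite -(eqp_dvdl g hdf).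
case: (irredp_XsubCP irg fdg) => hfg.
  by move: hfg; rewrite -size_poly_eq1 => /eqP h; move: irf.1; rewrite h.
by move: hfg; rewrite eqp_monic // (negbTE fg).
Qed.

Lemma coprime_prod (f : {poly K}) (r : seq {poly K}) (k : {poly K} -> nat) :
  mirr f -> (forall g, g \in r -> mirr g /\ g != f) ->
  coprimep f (\prod_(g <- r) g ^+ k g).
Proof.
move=> mf; elim: r => [|g r IH] h; first by rewrite big_nil coprimep1.
rewrite big_cons coprimepMr; apply/andP; split.
  have [mg gf] := h g (mem_head _ _).
  by apply: coprimep_expr; apply: coprime_mirr => //; rewrite eq_sym.
by apply: IH => g' hg'; apply: h; rewrite inE hg' orbT.
Qed.

Lemma mirr_norm (d : {poly K}) : irreducible_poly d ->
  mirr ((lead_coef d)^-1 *: d) /\ d = (lead_coef d)%:P * ((lead_coef d)^-1 *: d).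
Proof.
move=> ird.
have d0 : d != 0 by apply/eqP => e; move: ird.1; rewrite e size_poly0.
have l0 : lead_coef d != 0 by rewrite lead_coef_eq0.
have li0 : (lead_coef d)^-1 != 0 by rewrite invr_eq0.
split; last by rewrite mul_polyC scalerA divff // scale1r.
split; first by rewrite monicE lead_coefZ mulVf.
split; first by rewrite size_scale //; exact: ird.1.
move=> q q1 qd; rewrite dvdpZr // in qd.
apply: (eqp_trans (ird.2 q q1 qd)); rewrite eqp_sym; exact: eqp_scale.
Qed.

End Poly.

Section Main.
Variables (K : fieldType) (C : kconf K) (hC : is_kernel_config C).
Variables (V : lmodType K) (th : {linear V -> V}).
Hypotheses (hE : C_endo C th) (hI : C_image_complete C th).
Local Notation pe := (peval th).

Lemma Stab_f f n : mirr f -> kc_c C f = Some n -> Stab th f (f ^+ n).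
Proof.
move=> mf Hf; split; last first.
  move=> x; have : inIm th (f ^+ n) (pe (f ^+ n) x) by exists x.
  by case/(hI mf Hf) => z hz; exists z; rewrite -exprS.
move=> x; rewrite -exprS => h.
move: hE; rewrite /C_endo; case Ed: (kc_d C) => [d0|] hE'; last first.
  by apply/(hE' f n mf Hf x).
move: hC; rewrite /is_kernel_config Ed => -[_ [s0 [us ms zs ns _]]].
have hs0 : forall g, mirr g -> kc_c C g <> Some 0%N -> g \in s0.
  by move=> g mg hg; case: (boolP (g \in s0)) => // H; case: hg; apply: zs.
have M0 := hE' s0 us ms hs0.
have [Q eM cQ] : exists2 Q, \prod_(g <- s0) g ^+ odflt 0%N (kc_c C g) = f ^+ n * Q & coprimep f Q.
  case: (boolP (f \in s0)) => fs.
    exists (\prod_(g <- rem f s0) g ^+ odflt 0%N (kc_c C g)); first by rewrite (big_rem f fs) /= Hf.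
    apply: coprime_prod => // g; rewrite (mem_rem_uniq f us) inE => /andP [gf gs].
    by split => //; apply: ms.
  have := zs f mf fs; rewrite Hf => -[n0]; subst n.
  exists (\prod_(g <- s0) g ^+ odflt 0%N (kc_c C g)); first by rewrite expr0 mul1r.
  apply: coprime_prod => // g gs; split; first exact: ms.
  by apply/eqP => e; move: gs; rewrite e (negbTE fs).
case/Bezout_eq1_coprimepP: cQ => [[u v]] /= huv.
have e1 : pe (u * f * f ^+ n) x = 0 by rewrite -mulrA -exprS pe_mul h pe0x.
have e2 : pe (v * Q * f ^+ n) x = 0.
  by rewrite -mulrA (mulrC Q) -eM pe_mul M0 pe0x.
by rewrite -[pe _ x](pe_one th) -huv pe_add !pe_mul -!pe_mul e1 e2 addr0.
Qed.

Lemma Stab_FC (F : seq {poly K}) :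
  (forall f, f \in F -> mirr f /\ exists n, kc_c C f = Some n) ->
  (forall f, f \in F -> Stab th f (FC C F)) /\ Stab th (FC C F) (FC C F).
Proof.
move=> hF.
have H1 : forall f, f \in F -> Stab th f (FC C F).
  move=> f fF; have [mf [n Hf]] := hF f fF.
  rewrite /FC (big_rem f fF) /= Hf /=; apply: StabR; exact: Stab_f.
split=> //; rewrite {1}/FC; apply: Stab_prod => f fF; apply: StabX; exact: H1.
Qed.

Lemma Stab_gen (P : {poly K}) : forall p : {poly K}, p != 0 ->
  (forall d, irreducible_poly d -> d %| p -> Stab th d P) -> Stab th p P.
Proof.
move=> p; move: {2}(size p) (leqnn (size p)) => n; elim: n p => [|n IH] p hs p0 hd.
  by move: hs; rewrite leqn0 size_poly_eq0 (negbTE p0).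
case: (leqP (size p) 1) => hs1.
  rewrite (size1_polyC hs1); apply: StabC.
  by apply: contra p0 => /eqP h; rewrite (size1_polyC hs1) h polyC0.
case: (classic (irreducible_poly p)) => ir; first by apply: hd.
have : ~ (forall q : {poly K}, size q != 1 -> q %| p -> q %= p) by move=> H; apply: ir; exact: (pair hs1 H).
move=> /not_all_ex_not [q] H1; have [q1 H2] := imply_to_and _ _ H1; have [qp nqp] := imply_to_and _ _ H2.
have q0 : q != 0 by apply: contraTneq qp => ->; rewrite dvd0p.
set r := p %/ q.
have epr : p = r * q by rewrite divpK.
have r0 : r != 0 by apply: contra p0 => /eqP r0; rewrite epr r0 mul0r.
have sq2 : (1 < size q)%N.
  by rewrite ltn_neqAle eq_sym q1 /= lt0n size_poly_eq0.
have sqp : (size q < size p)%N.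
  rewrite ltn_neqAle (dvdp_leq p0 qp) andbT dvdp_size_eqp //.
  by apply/negP.
have hsp : size p = (size r + size q).-1 by rewrite {1}epr size_mul.
have srp : (size r < size p)%N.
  by rewrite hsp; move: sq2; clear; lia.
rewrite epr; apply: StabM; apply: IH.
- by rewrite -ltnS (leq_trans srp).
- exact: r0.
- by move=> d ird dr; apply: hd => //; rewrite epr dvdp_mulr.
- by rewrite -ltnS (leq_trans sqp).
- exact: q0.
- by move=> d ird dq; apply: hd => //; rewrite epr dvdp_mull.
Qed.
End Main.

Section Form.
Variable K : fieldType.

Fixpoint thn (n : nat) (t : term K) : term K :=
  match n with 0 => t | n'.+1 => TTheta (thn n' t) end.

Definition pterm (p : {poly K}) (t : term K) : term K :=
  foldr (fun i acc => TAdd (TScale p`_i (thn i t)) acc) (@TZero K) (iota 0 (size p)).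

Definition subt (t1 t2 : term K) := TAdd t1 (TScale (-1) t2).
Definition imF (P : {poly K}) (t : term K) := FEx 2 (FEq t (pterm P (TVar K 2))).

Definition phi1 P := FAnd (imF P (TVar K 1)) (FEq (pterm P (subt (TVar K 0) (TVar K 1))) (@TZero K)).
Definition phi2 P := FAnd (FEq (pterm P (TVar K 1)) (@TZero K))
                          (FEx 2 (FEq (TVar K 0) (TAdd (pterm P (TVar K 2)) (TVar K 1)))).
Definition phi3 P eta := FAnd (imF P (TVar K 1)) (FAnd (imF P (pterm eta (TVar K 1)))
   (FEq (pterm P (subt (TVar K 0) (pterm eta (TVar K 1)))) (@TZero K))).

Variables (V : lmodType K) (th : {linear V -> V}).
Local Notation pe := (peval th).

Lemma teval_thn e n t : teval th e (thn n t) = iter n th (teval th e t).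
Proof. by elim: n => //= n ->. Qed.

Lemma teval_pterm e p t : teval th e (pterm p t) = pe p (teval th e t).
Proof.
have H : forall r, teval th e (foldr (fun i acc => TAdd (TScale p`_i (thn i t)) acc) (@TZero K) r)
   = \sum_(i <- r) p`_i *: iter i th (teval th e t).
  elim=> [|i r IH] /=; first by rewrite big_nil.
  by rewrite big_cons IH teval_thn.
rewrite /pterm H /peval -(big_mkord xpredT (fun i => p`_i *: iter i th (teval th e t))).
by rewrite /index_iota subn0.
Qed.

Lemma teval_subt e t1 t2 : teval th e (subt t1 t2) = teval th e t1 - teval th e t2.
Proof. by rewrite /= scaleN1r. Qed.

Lemma projIm_alt P x w : projIm th P x w <-> (inIm th P w /\ pe P (x - w) = 0).
Proof.
split=> [[h [v [hv ->]]]|[h hk]]; first by rewrite addrC addKr.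
by split=> //; exists (x - w); split=> //; rewrite addrC subrK.
Qed.

Lemma projKer_Im P x v : projKer th P x v <-> projIm th P x (x - v).
Proof.
split=> [[hv [u [hu hx]]]|[hu [v' [hv' hx]]]].
  by split; [rewrite hx addrK | exists v; split => //; rewrite subrK].
split; last by exists (x - v); split => //; rewrite subrK.
have e : v' = v by apply: (addrI (x - v)); rewrite -hx subrK.
by rewrite -e.
Qed.

Lemma inIm_lin P a u u' : inIm th P u -> inIm th P u' -> inIm th P (a *: u + u').
Proof. by move=> [y ->] [y' ->]; exists (a *: y + y'); rewrite pe_lin. Qed.

Lemma inKer_lin P a u u' : inKer th P u -> inKer th P u' -> inKer th P (a *: u + u').
Proof. by rewrite /inKer pe_lin => -> ->; rewrite scaler0 addr0. Qed.

Lemma projIm_lin P a x x' u u' : projIm th P x u -> projIm th P x' u' ->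
  projIm th P (a *: x + x') (a *: u + u').
Proof.
move=> [hu [v [hv ->]]] [hu' [v' [hv' ->]]]; split; first exact: inIm_lin.
exists (a *: v + v'); split; first exact: inKer_lin.
by rewrite scalerDr addrACA.
Qed.

End Form.
Unset Implicit Arguments. Set Strict Implicit.

Theorem theorem3p15 (K : fieldType) (C : kconf K) (hC : is_kernel_config C) :
  (* (1) *)
  (forall F : seq {poly K}, good_F C F ->
     exists phi : formula K, forall (V : lmodType K) (th : {linear V -> V}),
       C_endo C th -> C_image_complete C th ->
       defines_linear_map th phi (projIm th (FC C F))) /\
  (* (2) *)
  (forall F : seq {poly K}, good_F C F ->
     exists phi : formula K, forall (V : lmodType K) (th : {linear V -> V}),
       C_endo C th -> C_image_complete C th ->
       defines_linear_map th phi (projKer th (FC C F))) /\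
  (* (3) *)
  (forall (eta : {poly K}) (s : seq {poly K}),
     eta \is monic -> (forall f, mirr f -> f %| eta -> kc_c C f <> None) ->
     is_Fac eta s ->
     exists phi : formula K, forall (V : lmodType K) (th : {linear V -> V}),
       C_endo C th -> C_image_complete C th ->
       (forall x, exists! w, projIm th (FC C s) x w) /\
       defines_linear_map th phi (invRel th (FC C s) eta)).
Proof.
split; [|split].
- move=> F [uF hF]; exists (phi1 (FC C F)) => V th hE hI.
  have hF' : forall f, f \in F -> mirr f /\ exists n, kc_c C f = Some n.
    by move=> f /hF [mf [n [hn _]]]; split => //; exists n.
  have [_ SP] := Stab_FC hC hE hI hF'.
  split.
    apply: gen_lin; last by move=> *; apply: projIm_lin.
    move=> x; case: (Stab_dec x SP) => u hu uq; exists u; split => // u' h.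
    by rewrite (uq _ h).
  move=> e; rewrite projIm_alt /= teval_pterm teval_subt /=.
  split=> [[[y hy] h2]|[[y hy] h2]]; split=> //; exists y => //.
    by rewrite /= teval_pterm /= in hy.
  by rewrite /= teval_pterm /=.
- move=> F [uF hF]; exists (phi2 (FC C F)) => V th hE hI.
  have hF' : forall f, f \in F -> mirr f /\ exists n, kc_c C f = Some n.
    by move=> f /hF [mf [n [hn _]]]; split => //; exists n.
  have [_ SP] := Stab_FC hC hE hI hF'.
  split.
    apply: gen_lin.
      move=> x; case: (Stab_dec x SP) => u hu uq; exists (x - u); split.
        by apply/projKer_Im; rewrite opprB addrC subrK.
      move=> v' /projKer_Im /uq <-; by rewrite opprB addrC subrK.
    move=> a x x' y y' /projKer_Im h /projKer_Im h'; apply/projKer_Im.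
    have := projIm_lin a h h'.
    by rewrite scalerBr opprD addrACA.
  move=> e /=; rewrite teval_pterm /=; split.
    move=> [h1 [y hy]]; split => //; exists (peval th (FC C F) y); split; first by exists y.
    by rewrite teval_pterm /= in hy.
  move=> [h1 [u [[y ->] hx]]]; split => //; exists y.
  by rewrite teval_pterm /=.
- move=> eta s meta hdiv [us hs]; exists (phi3 (FC C s) eta) => V th hE hI.
  have hF' : forall f, f \in s -> mirr f /\ exists n, kc_c C f = Some n.
    move=> f /hs [mf fe]; split => //.
    by case E: (kc_c C f) => [n|]; [exists n | case: (hdiv f mf fe)].
  have [Sf SP] := Stab_FC hC hE hI hF'.
  set P := FC C s.
  have eta0 : eta != 0 by apply: contraTneq meta => ->; rewrite monicE lead_coef0 eq_sym oner_eq0.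
  have Seta : Stab th eta P.
    apply: Stab_gen => // d ird dd.
    have [mf ed] := mirr_norm ird.
    rewrite ed; apply: StabM.
      by apply: StabC; rewrite lead_coef_eq0; apply/eqP => e; move: ird.1; rewrite e size_poly0.
    apply: Sf; apply/hs; split => //.
    by rewrite dvdpZl // invr_eq0 lead_coef_eq0; apply/eqP => e; move: ird.1; rewrite e size_poly0.
  split.
    move=> x; case: (Stab_dec x SP) => u hu uq; exists u; split => // u' h.
    by rewrite (uq _ h).
  split.
    apply: gen_lin.
      move=> x; case: (Stab_dec x SP) => w hw uq.
      have [[y hy] _] := hw.
      have [z hz] := Seta.2 y.
      exists (peval th P z); split.
        split; first by exists z.
        by rewrite -pe_mul -hz -hy.
      move=> u' [[y' hy'] hp].
      have e1 := uq _ hp.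
      have := hz; rewrite -hy -e1 hy' pe_mul => /esym h.
      have : peval th (eta * P) (y' - z) = 0 by rewrite peB !pe_mul h subrr.
      move/(Seta.1); rewrite peB => /eqP; rewrite subr_eq0 => /eqP.
      by move=> ->.
    move=> a x x' u u' [hu hpu] [hu' hpu']; split; first exact: inIm_lin.
    by rewrite pe_lin; apply: projIm_lin.
  move=> e /=; split.
    move=> [[y hy] [[z hz] h2]]; rewrite !teval_pterm /upd /= in hy hz.
    rewrite teval_pterm teval_subt /= teval_pterm /= in h2.
    split; first by exists y.
    by apply/projIm_alt; split => //; exists z.
  move=> [[y hy] /projIm_alt [[z hz] h2]]; split; first by exists y; rewrite teval_pterm.
  split; first by exists z; rewrite !teval_pterm.
  by rewrite teval_pterm teval_subt /= teval_pterm.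
Qed.
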